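(* The family of all finite connected graphs together with all confluent epimorphisms between them is a projective Fraïssé family.
   Context: A graph is a pair $A=(V(A),E(A))$ with $E(A)\subseteq V(A)^2$ reflexive and symmetric. An epimorphism $f\colon A\to B$ is a map $V(A)\to V(B)$ sending edges to edges and surjective on vertices and on edges. A set $S\subseteq V(G)$ is disconnected if $S=P\cup Q$ with $P,Q$ nonempty disjoint and no edge of $G$ between $P$ and $Q$; otherwise connected. The component of $S$ containing $a\in S$ is the largest connected subset of $S$ containing $a$. An epimorphism $f\colon G\to H$ is confluent if for every connected $Q\subseteq V(H)$ and every component $C$ of $f^{-1}(Q)$ we have $f(C)=Q$. A class $\mathcal F$ of finite graphs with a fixed class of epimorphisms is a projective Fraïssé family if: (1) it has countably many isomorphism types; (2) the fixed epimorphisms are closed under composition and include identities; (3) for $B,C\in\mathcal F$ there are $D\in\mathcal F$ and fixed epimorphisms $D\to B$, $D\to C$; (4) for fixed epimorphisms $f\colon B\to A$, $g\colon C\to A$ there are $D\in\mathcal F$ and fixed epimorphisms $f_0\colon D\to B$, $g_0\colon D\to C$ with $f\circ f_0=g\circ g_0$. *)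

(* Defs.v *)
From mathcomp Require Import all_boot.
Set Implicit Arguments. Unset Strict Implicit. Unset Printing Implicit Defensive.

Record graph := Graph {
  gV :> finType;
  gE : rel gV;
  gE_refl : reflexive gE;
  gE_sym : symmetric gE }.

Definition epimorphism (A B : graph) (f : A -> B) : Prop :=
  [/\ (forall x y : A, gE x y -> gE (f x) (f y)),
      (forall b : B, exists a : A, f a = b) &
      (forall b1 b2 : B, gE b1 b2 ->
         exists a1 a2 : A, [/\ gE a1 a2, f a1 = b1 & f a2 = b2])].

Definition disconnected (G : graph) (S : {set G}) : Prop :=
  exists P Q : {set G},
    [/\ S = P :|: Q, P != set0, Q != set0, [disjoint P & Q] &
        forall p q, p \in P -> q \in Q -> ~~ gE p q].

Definition connected (G : graph) (S : {set G}) : Prop := ~ disconnected S.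

Definition component_of (G : graph) (S : {set G}) (a : G) (C : {set G}) : Prop :=
  [/\ a \in S, a \in C, C \subset S, connected C &
      forall D : {set G}, a \in D -> D \subset S -> connected D -> D \subset C].

Definition is_component (G : graph) (S C : {set G}) : Prop :=
  exists a : G, component_of S a C.

Definition confluent (G H : graph) (f : G -> H) : Prop :=
  forall Q : {set H}, connected Q ->
  forall C : {set G}, is_component (f @^-1: Q) C -> f @: C = Q.

Definition confluent_epi (G H : graph) (f : G -> H) : Prop :=
  epimorphism f /\ confluent f.

Definition connected_graph (G : graph) : Prop :=
  (exists v : G, True) /\ connected [set: G].

Definition graph_iso (A B : graph) : Prop :=
  exists f : A -> B, bijective f /\ forall x y : A, gE (f x) (f y) = gE x y.

Definition projective_fraisse_family (F : graph -> Prop)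
  (M : forall A B : graph, (A -> B) -> Prop) : Prop :=
  [/\
      (exists s : nat -> graph, forall A, F A -> exists n, graph_iso A (s n)),
      (forall (A B C : graph) (f : A -> B) (g : B -> C),
         F A -> F B -> F C -> M A B f -> M B C g -> M A C (g \o f)) /\
      (forall A : graph, F A -> M A A id),
      (forall B C : graph, F B -> F C ->
         exists D : graph, F D /\
           exists (f : D -> B) (g : D -> C), M D B f /\ M D C g) &
      (forall (A B C : graph) (f : B -> A) (g : C -> A),
         F A -> F B -> F C -> M B A f -> M C A g ->
         exists D : graph, F D /\
           exists (f0 : D -> B) (g0 : D -> C),
             [/\ M D B f0, M D C g0 & f \o f0 =1 g \o g0])].

(* Main.v *)
Require Import Defs.
From mathcomp Require Import all_boot.
Set Implicit Arguments. Unset Strict Implicit. Unset Printing Implicit Defensive.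

Lemma connect_inv (T : finType) (e : rel T) (P : T -> Prop) a y :
  P a -> (forall x z, P x -> e x z -> P z) -> connect e a y -> P y.
Proof.
move=> Pa step /connectP [p pth ->]; elim: p a Pa pth => [|x p IH] a Pa //=.
by case/andP=> eax pth; exact: IH (step _ _ Pa eax) pth.
Qed.

Section Conn.
Variable G : graph.
Implicit Types (S T D C : {set G}) (a x y : G).
Definition rS (S : {set G}) : rel G := fun x y => [&& x \in S, y \in S & gE x y].
Definition Comp (S : {set G}) (a : G) : {set G} := [set y | connect (rS S) a y].

Lemma rS_sym S : symmetric (rS S).
Proof. by move=> x y; rewrite /rS gE_sym; case: (x \in S); case: (y \in S). Qed.

Lemma rS_connect_sym S x y : connect (rS S) x y -> connect (rS S) y x.
Proof. by rewrite (sym_connect_sym (rS_sym S)). Qed.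

Lemma connectedP (S : {set G}) :
  connected S <-> {in S &, forall x y, connect (rS S) x y}.
Proof.
split.
- move=> cS x y xS yS; apply/idPn => nxy; apply: cS.
  exists [set z in S | connect (rS S) x z], (S :\: [set z in S | connect (rS S) x z]).
  split.
  + apply/setP => z; rewrite !inE.
    by case: (z \in S); case: (connect _ x z).
  + by apply/set0Pn; exists x; rewrite inE xS connect0.
  + by apply/set0Pn; exists y; rewrite !inE yS (negbTE nxy).
  + rewrite -setI_eq0; apply/eqP/setP => z; rewrite !inE.
    by case: (z \in S); case: (connect _ x z).
  + move=> p q; rewrite !inE => /andP [pS cxp] /andP [nq qS].
    apply/negP => epq; move: nq; rewrite qS /=.
    by rewrite (connect_trans cxp (connect1 (_ : rS S p q))) // /rS pS qS.
- move=> H [P [Q [defS nP nQ dPQ noE]]].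
  case/set0Pn: nP => p pP; case/set0Pn: nQ => q qQ.
  have pS : p \in S by rewrite defS inE pP.
  have qS : q \in S by rewrite defS inE qQ orbT.
  have qP : q \in P.
    apply: (connect_inv (P := fun z => z \in P)) (H p q pS qS) => //.
    move=> x z xP /and3P [_ zS exz].
    move: zS; rewrite defS inE => /orP [//|zQ].
    by move: (noE x z xP zQ); rewrite exz.
  by move: (disjointFl dPQ qQ); rewrite qP.
Qed.

Lemma comp_sub S a : a \in S -> Comp S a \subset S.
Proof.
move=> aS; apply/subsetP => y; rewrite inE.
by apply: (connect_inv (P := fun z => z \in S)) aS _ => x z _ /and3P [].
Qed.

Lemma connect_mono (S T : {set G}) x y : S \subset T ->
  connect (rS S) x y -> connect (rS T) x y.
Proof.
move=> ST; apply: (connect_inv (P := fun z => connect (rS T) x z)) (connect0 _ _) _ => u z cu /and3P [uS zS e].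
apply: connect_trans cu (connect1 _).
by rewrite /rS (subsetP ST _ uS) (subsetP ST _ zS).
Qed.

Lemma comp_connect S a y : connect (rS S) a y -> connect (rS (Comp S a)) a y.
Proof.
move=> H.
suff : connect (rS S) a y /\ connect (rS (Comp S a)) a y by case.
apply: (connect_inv (P := fun z => connect (rS S) a z /\ connect (rS (Comp S a)) a z)) H.
  by split; apply: connect0.
move=> x z [c1 c2] exz; have c3 := connect_trans c1 (connect1 exz).
split => //; apply: connect_trans c2 (connect1 _).
case/and3P: exz => _ _ e.
by rewrite /rS !inE c1 c3.
Qed.

Lemma comp_connected S a : connected (Comp S a).
Proof.
apply/connectedP => x y; rewrite !inE => cx cy.
apply: connect_trans (comp_connect cy).
exact: rS_connect_sym (comp_connect cx).
Qed.

Lemma comp_max S a D : a \in D -> D \subset S -> connected D -> D \subset Comp S a.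
Proof.
move=> aD DS /connectedP cD; apply/subsetP => d dD; rewrite inE.
exact: connect_mono DS (cD a d aD dD).
Qed.

Lemma component_ofE S a C : component_of S a C <-> a \in S /\ C = Comp S a.
Proof.
split.
- case=> aS aC CS cC maxC; split => //.
  apply/eqP; rewrite eqEsubset; apply/andP; split.
    exact: comp_max.
  apply: maxC; [by rewrite inE connect0 | exact: comp_sub | exact: comp_connected].
- case=> aS ->; split => //.
  + by rewrite inE connect0.
  + exact: comp_sub.
  + exact: comp_connected.
  + move=> D aD DS cD; exact: comp_max.
Qed.

Lemma connected_comp_full S a : connected S -> a \in S -> Comp S a = S.
Proof.
move=> /connectedP cS aS; apply/eqP; rewrite eqEsubset comp_sub //=.
by apply/subsetP => y yS; rewrite inE cS.
Qed.

Lemma edge_connected (u v : G) : gE u v -> connected [set u; v].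
Proof.
move=> e; apply/connectedP => x y xS yS; apply: connect1.
rewrite /rS xS yS /=; move: xS yS; rewrite !inE.
by case/orP => /eqP -> /orP [] /eqP ->; rewrite ?gE_refl // gE_sym.
Qed.

End Conn.

Definition confC (G H : graph) (f : G -> H) : Prop :=
  forall Q : {set H}, connected Q -> forall a : G, f a \in Q -> f @: Comp (f @^-1: Q) a = Q.

Definition ehom (G H : graph) (f : G -> H) := forall x y : G, gE x y -> gE (f x) (f y).

Lemma confluentE (G H : graph) (f : G -> H) : confluent f <-> confC f.
Proof.
split.
- move=> cf Q cQ a aQ; apply: (cf Q cQ (Comp (f @^-1: Q) a)); exists a.
  by apply/component_ofE; rewrite inE.
- move=> cf Q cQ C [a /component_ofE [aQ ->]].
  by rewrite inE in aQ; apply: (cf Q cQ a aQ).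
Qed.

Lemma hom_connect (G H : graph) (f : G -> H) (S : {set G}) (T : {set H}) a y :
  ehom f -> (forall x, x \in S -> f x \in T) -> a \in S ->
  connect (rS S) a y -> connect (rS T) (f a) (f y).
Proof.
move=> hf ST aS Hc.
suff : y \in S /\ connect (rS T) (f a) (f y) by case.
apply: (connect_inv (P := fun z => z \in S /\ connect (rS T) (f a) (f z))) Hc.
  by split => //; apply: connect0.
move=> x z [xS c] /and3P [_ zS e]; split => //.
apply: connect_trans c (connect1 _).
by rewrite /rS !ST // hf.
Qed.

Lemma confC_comp (A B C : graph) (f : A -> B) (g : B -> C) :
  ehom f -> confC f -> confC g -> confC (g \o f).
Proof.
move=> hf cf cg Q cQ a aQ.
have faQ : f a \in g @^-1: Q by rewrite inE.
set L := Comp (g @^-1: Q) (f a).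
have gL : g @: L = Q := cg Q cQ (f a) aQ.
have Lc : connected L by apply: comp_connected.
have faL : f a \in L by rewrite inE connect0.
have fK : f @: Comp (f @^-1: L) a = L := cf L Lc a faL.
suff -> : Comp ((g \o f) @^-1: Q) a = Comp (f @^-1: L) a by rewrite imset_comp fK.
have aS : a \in (g \o f) @^-1: Q by rewrite inE.
apply/setP => y; rewrite !inE; apply/idP/idP => H.
- apply: connect_mono (comp_connect H).
  apply/subsetP => z; rewrite !inE => cz.
  by apply: hom_connect hf _ aS cz => x; rewrite !inE.
- apply: connect_mono H; apply/subsetP => z; rewrite !inE => fz.
  have fzL : f z \in L by rewrite inE.
  by have := subsetP (comp_sub faQ) _ fzL; rewrite inE.
Qed.

Lemma confC_id (G : graph) : connected [set: G] -> confC (@id G).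
Proof.
move=> _ Q cQ a aQ.
have -> : id @^-1: Q = Q by apply/setP => x; rewrite inE.
by rewrite connected_comp_full // imset_id.
Qed.

Lemma proj_confC (A B C D : graph) (f : B -> A) (g : C -> A) (f0 : D -> B) (g0 : D -> C) :
  ehom f -> confC g ->
  (forall x, f (f0 x) = g (g0 x)) ->
  (forall x b c, f b = g c -> gE (f0 x) b -> gE (g0 x) c ->
     exists y, [/\ f0 y = b, g0 y = c & gE x y]) ->
  confC f0.
Proof.
move=> hf cg comm star Q cQ a aQ.
have aS : a \in f0 @^-1: Q by rewrite inE.
set K := Comp (f0 @^-1: Q) a.
have KS := comp_sub aS.
have stepK : forall x y, x \in K -> f0 y \in Q -> gE x y -> y \in K.
  move=> x y xK yQ e; move: (xK); rewrite !inE => cx.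
  apply: connect_trans cx (connect1 _).
  by rewrite /rS (subsetP KS _ xK) inE yQ e.
apply/eqP; rewrite eqEsubset; apply/andP; split.
  by apply/subsetP => _ /imsetP [k kK ->]; have := subsetP KS _ kK; rewrite inE.
have Im_step : forall q0 q, q0 \in f0 @: K -> q \in Q -> gE q0 q -> q \in f0 @: K.
  move=> q0 q /imsetP [k kK ->] qQ e.
  have q0Q : f0 k \in Q by have := subsetP KS _ kK; rewrite inE.
  set Q' := [set f (f0 k); f q].
  have cQ' : connected Q' := edge_connected (hf _ _ e).
  have gk : g (g0 k) \in Q' by rewrite -comm !inE eqxx.
  have := cg Q' cQ' (g0 k) gk.
  move/setP/(_ (f q)); rewrite !inE eqxx orbT => /imsetP [c cL gc].
  pose h d := if g d == f q then q else f0 k.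
  have hQ d : h d = q \/ h d = f0 k by rewrite /h; case: ifP; auto.
  have hE u v : (u = q \/ u = f0 k) -> (v = q \/ v = f0 k) -> gE u v.
    by case=> -> [] ->; rewrite ?gE_refl // gE_sym.
  have hf_ d : g d \in Q' -> f (h d) = g d.
    move=> Hd; rewrite /h; case: eqP => [-> //|ne].
    by move: Hd; rewrite !inE => /orP [/eqP -> //| /eqP].
  have hin d : h d \in Q by case: (hQ d) => ->.
  have Ph : forall d, connect (rS (g @^-1: Q')) (g0 k) d ->
      exists2 y, y \in K & (f0 y = h d /\ g0 y = d).
    move=> d0; apply: (connect_inv (P := fun d => exists2 y, y \in K & (f0 y = h d /\ g0 y = d))).
      have [y [fy gy ky]] := star k (h (g0 k)) (g0 k) (hf_ _ gk)
        (hE _ _ (or_intror erefl) (hQ _)) (gE_refl _).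
      by exists y; [apply: stepK kK _ ky; rewrite fy | split].
    move=> x z [y yK [fy gy]] /and3P [xQ zQ exz].
    rewrite inE in zQ.
    have e1 : gE (f0 y) (h z) by rewrite fy; apply: hE (hQ x) (hQ z).
    have e2 : gE (g0 y) z by rewrite gy.
    have [y' [fy' gy' ky']] := star y (h z) z (hf_ _ zQ) e1 e2.
    by exists y'; [apply: stepK yK _ ky'; rewrite fy' | split].
  have cL' : connect (rS (g @^-1: Q')) (g0 k) c by rewrite inE in cL.
  have [y yK [fy _]] := Ph c cL'.
  by apply/imsetP; exists y => //; rewrite fy /h -gc eqxx.
apply/subsetP => q qQ.
have := (connectedP Q).1 cQ (f0 a) q aQ qQ.
apply: (connect_inv (P := fun z => z \in f0 @: K)).
  by apply: imset_f; rewrite inE connect0.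
by move=> x z xI /and3P [_ zQ exz]; exact: Im_step xI zQ exz.
Qed.

Lemma confC_epi (D B : graph) (f0 : D -> B) (d : D) :
  ehom f0 -> confC f0 -> connected [set: B] -> epimorphism f0.
Proof.
move=> hf cf cB; split => //.
- move=> b; have := cf _ cB d (in_setT _).
  by move/setP/(_ b); rewrite in_setT => /imsetP [x _ ->]; exists x.
- move=> b1 b2 e.
  have [x fx] : exists x, f0 x = b1.
    have := cf _ cB d (in_setT _).
    by move/setP/(_ b1); rewrite in_setT => /imsetP [x _ ->]; exists x.
  have xQ : f0 x \in [set b1; b2] by rewrite fx !inE eqxx.
  have := cf _ (edge_connected e) x xQ.
  move/setP/(_ b2); rewrite !inE eqxx orbT => /imsetP [y yK fy].
  rewrite inE in yK.
  have : f0 y = b1 \/ exists a1 a2, [/\ gE a1 a2, f0 a1 = b1 & f0 a2 = b2].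
    apply: (connect_inv (P := fun z => f0 z = b1 \/
          exists a1 a2, [/\ gE a1 a2, f0 a1 = b1 & f0 a2 = b2])) yK; first by left.
    move=> u z Pu /and3P [_ zQ euz]; rewrite !inE in zQ.
    case/orP: zQ => /eqP zb; first by left.
    right; case: Pu => [ub|//]; by exists u, z.
  case=> // yb; exists x, x; split => //; first exact: gE_refl.
  by rewrite fx -yb fy.
Qed.

Section Amalg.
Variables (A B C : graph) (f : B -> A) (g : C -> A) (p0 : (B * C)%type).

Definition PR : rel (B * C)%type := fun x y =>
  [&& f x.1 == g x.2, f y.1 == g y.2, gE x.1 y.1 & gE x.2 y.2].

Definition Dv := {p : (B * C)%type | connect PR p0 p}.
Definition Dedge : rel Dv := fun x y =>
  gE (val x).1 (val y).1 && gE (val x).2 (val y).2.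
Lemma Dedge_refl : reflexive Dedge.
Proof. by move=> x; rewrite /Dedge !gE_refl. Qed.
Lemma Dedge_sym : symmetric Dedge.
Proof. by move=> x y; rewrite /Dedge gE_sym (gE_sym (val x).2). Qed.
Definition Dg : graph := @Graph Dv Dedge Dedge_refl Dedge_sym.
Definition f0 (x : Dg) : B := (val x).1.
Definition g0 (x : Dg) : C := (val x).2.

Hypothesis hp0 : f p0.1 = g p0.2.

Lemma D_comm x : f (f0 x) = g (g0 x).
Proof.
apply/eqP; have := valP x.
apply: (connect_inv (P := fun z => f z.1 == g z.2)); first by apply/eqP.
by move=> u z _ /and4P [].
Qed.

Lemma D_star x b c : f b = g c -> gE (f0 x) b -> gE (g0 x) c ->
  exists y : Dg, [/\ f0 y = b, g0 y = c & gE x y].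
Proof.
move=> fbc e1 e2.
have H : connect PR p0 (b, c).
  apply: connect_trans (valP x) (connect1 _).
  have hx : f (val x).1 = g (val x).2 := D_comm x.
  by rewrite /PR /= hx eqxx fbc eqxx e1 e2.
by exists (exist _ (b, c) H); split => //; rewrite /= /Dedge /= e1 e2.
Qed.

Definition d0 : Dg := exist _ p0 (connect0 _ _).

Lemma D_connected : connected_graph Dg.
Proof.
split; first by exists d0.
have Hall : forall x : Dg, connect (rS [set: Dg]) d0 x.
  case=> p hp.
  suff : connect PR p0 p /\ forall hp : connect PR p0 p,
      connect (rS [set: Dg]) d0 (exist _ p hp) by case=> _; apply.
  apply: (connect_inv (P := fun p => connect PR p0 p /\ forall hp : connect PR p0 p,
      connect (rS [set: Dg]) d0 (exist _ p hp))) hp.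
    split; first exact: connect0.
    by move=> hp'; have -> : exist _ p0 hp' = d0 by apply: val_inj.
  move=> u z [hu Pu] e; have hz := connect_trans hu (connect1 e).
  split => // hz'; apply: connect_trans (Pu hu) (connect1 _).
  case/and4P: e => _ _ e1 e2.
  by rewrite /rS !in_setT /= /Dedge /= e1 e2.
apply/connectedP => x y _ _.
exact: connect_trans (rS_connect_sym (Hall x)) (Hall y).
Qed.

End Amalg.

Lemma amalg (A B C : graph) (f : B -> A) (g : C -> A) :
  connected_graph A -> connected_graph B -> connected_graph C ->
  confluent_epi f -> confluent_epi g ->
  exists D : graph, connected_graph D /\
    exists (f1 : D -> B) (g1 : D -> C),
      [/\ confluent_epi f1, confluent_epi g1 & f \o f1 =1 g \o g1].
Proof.
move=> _ [[b _] cB] [_ cC] [[hf _ _] /confluentE cf] [[hg sg _] /confluentE cg].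
have [c gc] := sg (f b).
pose p0 := (b, c).
have hp0 : f p0.1 = g p0.2 by rewrite gc.
exists (Dg f g p0); split; first exact: D_connected.
exists (f0 (f:=f) (g:=g) (p0:=p0)), (g0 (f:=f) (g:=g) (p0:=p0)).
have hf0 : ehom (f0 (f:=f) (g:=g) (p0:=p0)) by move=> x y /andP [].
have hg0 : ehom (g0 (f:=f) (g:=g) (p0:=p0)) by move=> x y /andP [].
have cf0 : confC (f0 (f:=f) (g:=g) (p0:=p0)).
  apply: (proj_confC (g0 := g0 (f:=f) (g:=g) (p0:=p0)) hf cg) => x; first exact: (D_comm hp0).
  by move=> b1 c1; apply: D_star.
have cg0 : confC (g0 (f:=f) (g:=g) (p0:=p0)).
  apply: (proj_confC (g0 := f0 (f:=f) (g:=g) (p0:=p0)) hg cf) => x; first by rewrite (D_comm hp0).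
  move=> c' b' e e1 e2; have [y [fy gy ey]] := D_star hp0 (esym e) e2 e1.
  by exists y.
split.
- split; last exact/confluentE.
  exact: (confC_epi (d0 f g p0)).
- split; last exact/confluentE.
  exact: (confC_epi (d0 f g p0)).
- by move=> x /=; apply: D_comm.
Qed.

Definition pt_rel : rel unit := fun _ _ => true.
Lemma pt_refl : reflexive pt_rel. Proof. by []. Qed.
Lemma pt_sym : symmetric pt_rel. Proof. by []. Qed.
Definition ptG : graph := @Graph unit pt_rel pt_refl pt_sym.

Lemma pt_connected : connected_graph ptG.
Proof.
split; first by exists tt.
by apply/connectedP => [[] []] _ _; apply: connect0.
Qed.

Lemma to_pt_conf (B : graph) : connected_graph B -> confluent_epi (fun _ : B => (tt : ptG)).
Proof.
move=> [[b _] cB].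
have cf : confC (fun _ : B => (tt : ptG)).
  move=> Q cQ a aQ.
  have QT : Q = setT by apply/setP => [[]]; rewrite in_setT.
  rewrite QT preimsetT (connected_comp_full cB (in_setT a)).
  by apply/setP => [[]]; rewrite in_setT; apply/imsetP; exists a; rewrite ?in_setT.
split; last exact/confluentE.
exact: (@confC_epi B ptG (fun _ => tt) b (fun _ _ _ => isT) cf pt_connected.2).
Qed.

Lemma comp_epi (A B C : graph) (f : A -> B) (g : B -> C) :
  epimorphism f -> epimorphism g -> epimorphism (g \o f).
Proof.
move=> [hf sf ef] [hg sg eg]; split.
- by move=> x y e; apply: hg; apply: hf.
- move=> c; have [b <-] := sg c; have [a <-] := sf b; by exists a.
- move=> c1 c2 e; have [b1 [b2 [e' <- <-]]] := eg _ _ e.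
  have [a1 [a2 [e'' <- <-]]] := ef _ _ e'.
  by exists a1, a2.
Qed.

Definition mkrel (n : nat) (r : {ffun 'I_n * 'I_n -> bool}) : rel 'I_n :=
  fun i j => (i == j) || r (i, j) || r (j, i).
Lemma mkrel_refl n r : reflexive (@mkrel n r).
Proof. by move=> i; rewrite /mkrel eqxx. Qed.
Lemma mkrel_sym n r : symmetric (@mkrel n r).
Proof. by move=> i j; rewrite /mkrel eq_sym orbAC. Qed.
Definition mkG n r : graph := @Graph 'I_n (mkrel r) (@mkrel_refl n r) (@mkrel_sym n r).

Definition enumG (k : nat) : graph :=
  match @unpickle (nat * nat)%type k with
  | Some (n, m) => mkG (odflt [ffun _ => false] (@unpickle {ffun 'I_n * 'I_n -> bool} m))
  | None => mkG (n := 0) [ffun _ => false]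
  end.

Lemma enumG_spec (A : graph) : exists n, graph_iso A (enumG n).
Proof.
pose r := [ffun p : 'I_#|A| * 'I_#|A| => gE (enum_val p.1 : A) (enum_val p.2)].
exists (pickle (#|A|, pickle r)).
rewrite /enumG pickleK /= pickleK /=.
exists enum_rank; split.
  exact: (Bijective enum_rankK enum_valK).
move=> x y; rewrite /= /mkrel !ffunE /= !enum_rankK (gE_sym y x).
case: (boolP (gE x y)) => e; first by rewrite !orbT.
rewrite !orbF; apply/eqP => /enum_rank_inj exy.
by move: e; rewrite exy gE_refl.
Qed.

Theorem corollary4p13 :
  projective_fraisse_family connected_graph confluent_epi.
Proof.
split.
- exists enumG => A _; exact: enumG_spec.
- split.
  + move=> A B C f g _ _ _ [ef /confluentE cf] [eg /confluentE cg]; split.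
      exact: comp_epi.
    apply/confluentE; apply: confC_comp => //; by case: ef.
  + move=> A [[a _] cA]; split; last by apply/confluentE; apply: confC_id.
    split => //; [by move=> b; exists b | by move=> b1 b2 e; exists b1, b2].
- move=> B C cB cC.
  have [D [cD [f1 [g1 [cf1 cg1 _]]]]] :=
    amalg pt_connected cB cC (to_pt_conf cB) (to_pt_conf cC).
  by exists D; split => //; exists f1, g1.
- move=> A B C f g cA cB cC cf cg; exact: amalg.
Qed.
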